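(* Let $\{\rho_n\}_{n\ge0},\{\beta_n\}_{n\ge0},\{\tau_n\}_{n\ge0}$ be complex sequences with $\rho_n\ne0$, $\tau_n\neq0$ for $n\ge0$, $\beta_0\neq0,\pm1$, $\beta_n\neq0$ for $n\ge1$. Let $\mathcal{P}_0(\lambda)=1$, $\mathcal{P}_1(\lambda)=\rho_0(\lambda-\beta_0)$ and $\mathcal{P}_{n+1}(\lambda)=\rho_n(\lambda-\beta_n)\mathcal{P}_n(\lambda)+\tau_n\lambda\,\mathcal{P}_{n-1}(\lambda)$ for $n\ge1$. Let $\{\alpha_n\}_{n\ge0}$ be nonzero real numbers with $\alpha_0=\tau_0\rho_0^{-1}$, $\alpha_1\neq\rho_0\beta_0$ and $$\alpha_n=-(\rho_{n-1}-\alpha_{n-1}^{-1}\tau_{n-1})+\rho_{n-1}\beta_{n-1},\quad n\ge2,$$ and put $\mathcal{Q}_0(\lambda)=1$, $\mathcal{Q}_n(\lambda)=\mathcal{P}_n(\lambda)+\alpha_n\mathcal{P}_{n-1}(\lambda)$, $n\ge1$. With $p_n=\alpha_{n-1}\rho_{n-1}-\tau_{n-1}$ and $q_n=\alpha_{n-1}(\alpha_n-\rho_{n-1}\beta_{n-1})$, assume $p_{n+1}\neq0$ and $q_n\neq0$ for all $n\ge1$. Suppose $\mathcal{Q}_1(1)=0$. Then $\mathcal{Q}_n(\lambda)$ has a common zero at $\lambda=1$ for all $n\ge2$, with $\mathcal{Q}_2(\lambda)$ having a double zero at $\lambda=1$ if $\alpha_1\,(\neq\rho_0\beta_0)$ is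 a root of the quadratic equation $\rho_1x^2-\rho_0\beta_0\tau_1=0$. However, if $\mathcal{Q}_2(\lambda)$ does not have a double zero at $\lambda=1$, then for every $n\ge2$, $\mathcal{Q}_n(\lambda)$ and $\mathcal{Q}_{n-1}(\lambda)$ have no common zero except at $\lambda=1$.
   Context: Standing assumptions of the paper in this setting: $p_{n+1}\neq0$, $q_n\neq0$ for $n\ge1$. *)

(* Defs.v *)
From HB Require Import structures.
From mathcomp Require Import all_boot all_order all_algebra.
From mathcomp Require Import complex.
From mathcomp Require Import Rstruct.
Set Implicit Arguments. Unset Strict Implicit. Unset Printing Implicit Defensive.
Import Order.TTheory GRing.Theory Num.Theory.
Local Open Scope ring_scope.

Notation CC := (complex Rdefinitions.R).

Fixpoint Ppair (rho beta tau : nat -> CC) (n : nat) : {poly CC} * {poly CC} :=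
  match n with
  | 0 => (1, (rho 0%N)%:P * ('X - (beta 0%N)%:P))
  | m.+1 =>
      let '(a, b) := Ppair rho beta tau m in
      (b, (rho m.+1)%:P * ('X - (beta m.+1)%:P) * b + (tau m.+1)%:P * 'X * a)
  end.

Definition Ppoly (rho beta tau : nat -> CC) (n : nat) : {poly CC} :=
  (Ppair rho beta tau n).1.

Definition alphaC (alpha : nat -> Rdefinitions.R) (n : nat) : CC :=
  ((alpha n)%:C)%C.

Definition Qpoly (rho beta tau : nat -> CC) (alpha : nat -> Rdefinitions.R)
    (n : nat) : {poly CC} :=
  match n with
  | 0 => 1
  | m.+1 => Ppoly rho beta tau m.+1 + (alphaC alpha m.+1)%:P * Ppoly rho beta tau m
  end.

Definition pcoef (rho tau : nat -> CC) (alpha : nat -> Rdefinitions.R) (n : nat) : CC :=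
  alphaC alpha n.-1 * rho n.-1 - tau n.-1.
Definition qcoef (rho beta : nat -> CC) (alpha : nat -> Rdefinitions.R) (n : nat) : CC :=
  alphaC alpha n.-1 * (alphaC alpha n - rho n.-1 * beta n.-1).

(* Main.v *)
Require Import Defs.
From HB Require Import structures.
From mathcomp Require Import all_boot all_order all_algebra.
From mathcomp Require Import complex.
From mathcomp Require Import Rstruct.
From mathcomp Require Import ring lra.
Import Order.TTheory GRing.Theory Num.Theory.
Local Open Scope ring_scope.

Lemma PpairS (rho beta tau : nat -> CC) m : Ppair rho beta tau m.+1 =
  ((Ppair rho beta tau m).2,
   (rho m.+1)%:P * ('X - (beta m.+1)%:P) * (Ppair rho beta tau m).2
     + (tau m.+1)%:P * 'X * (Ppair rho beta tau m).1).
Proof. by rewrite /=; case: (Ppair rho beta tau m). Qed.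

Lemma PpolySS (rho beta tau : nat -> CC) m : Ppoly rho beta tau m.+2 =
   (rho m.+1)%:P * ('X - (beta m.+1)%:P) * Ppoly rho beta tau m.+1
     + (tau m.+1)%:P * 'X * Ppoly rho beta tau m.
Proof. by rewrite /Ppoly PpairS PpairS. Qed.

Lemma hPSS (rho beta tau : nat -> CC) m z : (Ppoly rho beta tau m.+2).[z] =
   rho m.+1 * (z - beta m.+1) * (Ppoly rho beta tau m.+1).[z]
     + tau m.+1 * z * (Ppoly rho beta tau m).[z].
Proof. by rewrite PpolySS !hornerE. Qed.

Lemma hP1 (rho beta tau : nat -> CC) z : (Ppoly rho beta tau 1).[z] =
   rho 0%N * (z - beta 0%N).
Proof. by rewrite /Ppoly /= !hornerE. Qed.

Lemma hP0 (rho beta tau : nat -> CC) z : (Ppoly rho beta tau 0).[z] = 1.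
Proof. by rewrite /Ppoly /= hornerE. Qed.

Lemma hQS (rho beta tau : nat -> CC) alpha m z : (Qpoly rho beta tau alpha m.+1).[z] =
  (Ppoly rho beta tau m.+1).[z] + alphaC alpha m.+1 * (Ppoly rho beta tau m).[z].
Proof. by rewrite /Qpoly !hornerE. Qed.

Lemma P0nz (rho beta tau : nat -> CC)
  (hrho : forall n, rho n != 0) (hbeta0 : beta 0%N != 0)
  (hbeta : forall n, (1 <= n)%N -> beta n != 0) m :
  (Ppoly rho beta tau m).[0] != 0.
Proof.
suff: (Ppoly rho beta tau m).[0] != 0 /\ (Ppoly rho beta tau m.+1).[0] != 0 by case.
elim: m => [|m [IH1 IH2]].
  by rewrite hP0 hP1 oner_neq0 sub0r mulrN oppr_eq0 mulf_neq0.
split=> //; rewrite hPSS mulr0 mul0r addr0 sub0r mulrN mulNr oppr_eq0.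
by rewrite !mulf_neq0 // hbeta.
Qed.

Lemma Pnotboth (rho beta tau : nat -> CC)
  (hrho : forall n, rho n != 0) (htau : forall n, tau n != 0)
  (hbeta0 : beta 0%N != 0)
  (hbeta : forall n, (1 <= n)%N -> beta n != 0) m z :
  (Ppoly rho beta tau m).[z] = 0 -> (Ppoly rho beta tau m.+1).[z] = 0 -> False.
Proof.
have [->|zn0] := eqVneq z 0.
  by move=> h; move: (@P0nz rho beta tau hrho hbeta0 hbeta m); rewrite h eqxx.
elim: m => [|m IH]; first by rewrite hP0 => /eqP; rewrite oner_eq0.
move=> h1; rewrite hPSS h1 mulr0 add0r => /eqP; rewrite !mulf_eq0 (negbTE (htau _)) (negbTE zn0) /=.
by move/eqP => h0; exact: IH h0 h1.
Qed.

Theorem mainTheorem3 (rho beta tau : nat -> CC) (alpha : nat -> Rdefinitions.R)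
  (hrho : forall n, rho n != 0) (htau : forall n, tau n != 0)
  (hbeta0 : beta 0%N != 0) (hbeta0p : beta 0%N != 1) (hbeta0m : beta 0%N != -1)
  (hbeta : forall n, (1 <= n)%N -> beta n != 0)
  (halpha : forall n, alpha n != 0)
  (halpha0 : alphaC alpha 0 = tau 0%N / rho 0%N)
  (halpha1 : alphaC alpha 1 != rho 0%N * beta 0%N)
  (halphan : forall n, (2 <= n)%N ->
     alphaC alpha n = - (rho n.-1 - (alphaC alpha n.-1)^-1 * tau n.-1)
                      + rho n.-1 * beta n.-1)
  (hp : forall n, (1 <= n)%N -> pcoef rho tau alpha n.+1 != 0)
  (hq : forall n, (1 <= n)%N -> qcoef rho beta alpha n != 0)
  (hQ1 : root (Qpoly rho beta tau alpha 1) 1) :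
  (forall n, (2 <= n)%N -> root (Qpoly rho beta tau alpha n) 1) /\
  (rho 1%N * alphaC alpha 1 ^+ 2 - rho 0%N * beta 0%N * tau 1%N = 0 ->
     (('X - 1) ^+ 2 %| Qpoly rho beta tau alpha 2)%R) /\
  (~~ (('X - 1) ^+ 2 %| Qpoly rho beta tau alpha 2)%R ->
     forall n, (2 <= n)%N -> forall z : CC,
       root (Qpoly rho beta tau alpha n) z ->
       root (Qpoly rho beta tau alpha n.-1) z -> z = 1).
Proof.
have anz n : alphaC alpha n != 0.
  by apply/eqP => -[] /eqP; rewrite (negbTE (halpha n)).
have Q1 : forall m, (Qpoly rho beta tau alpha m.+1).[1] = 0.
  elim=> [|m IH]; first exact/eqP.
  move: IH; rewrite !hQS hPSS (halphan m.+2) //= => IH.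
  have -> : rho m.+1 * (1 - beta m.+1) * (Ppoly rho beta tau m.+1).[1] +
    tau m.+1 * 1 * (Ppoly rho beta tau m).[1] +
    (- (rho m.+1 - (alphaC alpha m.+1)^-1 * tau m.+1) + rho m.+1 * beta m.+1) *
    (Ppoly rho beta tau m.+1).[1] =
    tau m.+1 / alphaC alpha m.+1 * ((Ppoly rho beta tau m.+1).[1] +
       alphaC alpha m.+1 * (Ppoly rho beta tau m).[1]).
    by field; exact: anz.
  by rewrite IH mulr0.
have key : forall m z, (Qpoly rho beta tau alpha m.+2).[z] = 0 ->
    (Qpoly rho beta tau alpha m.+1).[z] = 0 ->
    pcoef rho tau alpha m.+2 * z + qcoef rho beta alpha m.+2 = 0.
  move=> m z; rewrite !hQS hPSS => h2 h1.
  have e1 : (Ppoly rho beta tau m.+1).[z] = - (alphaC alpha m.+1 * (Ppoly rho beta tau m).[z]).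
    by apply/eqP; rewrite -addr_eq0 h1.
  move: h2; rewrite e1 /pcoef /qcoef /= => h2.
  have : (alphaC alpha m.+1 * (alphaC alpha m.+2 - rho m.+1 * beta m.+1) +
     (alphaC alpha m.+1 * rho m.+1 - tau m.+1) * z) * (Ppoly rho beta tau m).[z] = 0.
    by rewrite -oppr0 -h2; ring.
  move/eqP; rewrite mulf_eq0 => /orP [/eqP h|/eqP h].
    by rewrite -h addrC.
  exfalso; apply: (@Pnotboth rho beta tau hrho htau hbeta0 hbeta m z h).
  by rewrite e1 h mulr0 oppr0.
split.
  by case=> [|[|m]] // _; rewrite /root Q1.
split.
  move=> hc; apply/dvdpP; exists (rho 1%N * rho 0%N)%:P.
  have e1 : alphaC alpha 1 = rho 0%N * (beta 0%N - 1).
    by move: (Q1 0%N); rewrite hQS hP1 hP0 mulr1 => /eqP; rewrite addr_eq0 => /eqP h; rewrite -[LHS]opprK -h; ring.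
  have ea2 := halphan 2%N isT; rewrite /= in ea2.
  rewrite /Qpoly PpolySS /Ppoly /= ea2.
  set a := alphaC alpha 1; set r0 := rho 0%N; set r1 := rho 1%N; set b0 := beta 0%N;
   set b1 := beta 1%N; set t1 := tau 1%N.
  have ha : a != 0 by exact: anz.
  have c1 : - r1 * r0 * (b0 + b1) + t1 + (- (r1 - a^-1 * t1) + r1 * b1) * r0 = -2 * r1 * r0.
    apply/eqP; rewrite -subr_eq0; apply/eqP.
    have -> : - r1 * r0 * (b0 + b1) + t1 + (- (r1 - a^-1 * t1) + r1 * b1) * r0 - -2 * r1 * r0
       = -(r1 * a ^+ 2 - r0 * b0 * t1) / a.
      rewrite /a /r0 /r1 /b0 /b1 /t1 e1; field; by rewrite ?mulf_neq0 ?hrho ?subr_eq0 ?hbeta0p.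
    by rewrite /a /r0 /r1 /b0 /t1 hc oppr0 mul0r.
  have c0 : r1 * r0 * b0 * b1 - (- (r1 - a^-1 * t1) + r1 * b1) * r0 * b0 = r1 * r0.
    apply/eqP; rewrite -subr_eq0; apply/eqP.
    have -> : r1 * r0 * b0 * b1 - (- (r1 - a^-1 * t1) + r1 * b1) * r0 * b0 - r1 * r0
       = (r1 * a ^+ 2 - r0 * b0 * t1) / a.
      rewrite /a /r0 /r1 /b0 /b1 /t1 e1; field; by rewrite ?mulf_neq0 ?hrho ?subr_eq0 ?hbeta0p.
    by rewrite /a /r0 /r1 /b0 /t1 hc mul0r.
  clearbody a r0 r1 b0 b1 t1; move: (a^-1 * t1) c1 c0 => k c1 c0.
  have -> : r1%:P * ('X - b1%:P) * (r0%:P * ('X - b0%:P)) + t1%:P * 'X * 1 +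
     (- (r1 - k) + r1 * b1)%:P * (r0%:P * ('X - b0%:P)) =
     (r1 * r0)%:P * 'X^2 + (- r1 * r0 * (b0 + b1) + t1 + (- (r1 - k) + r1 * b1) * r0)%:P * 'X
       + (r1 * r0 * b0 * b1 - (- (r1 - k) + r1 * b1) * r0 * b0)%:P.
    by ring.
  rewrite c1 c0; ring.
move=> _; case=> [|[|m]] // _ z hz hz1.
have d1 := key m 1 (Q1 m.+1) (Q1 m).
have dz := key m z (eqP hz) (eqP hz1).
have : pcoef rho tau alpha m.+2 * (z - 1) = 0.
  have -> : pcoef rho tau alpha m.+2 * (z - 1) =
    (pcoef rho tau alpha m.+2 * z + qcoef rho beta alpha m.+2) -
    (pcoef rho tau alpha m.+2 * 1 + qcoef rho beta alpha m.+2) by ring.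
  by rewrite dz d1 subrr.
move/eqP; rewrite mulf_eq0 (negbTE (hp m.+1 isT)) /= subr_eq0 => /eqP //.
Qed.
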